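(* Let $\mu,\nu$ be the Gibbs distributions of two spin systems on the same graph $G=(V,E)$. Then $d_{TV}(\mu,\nu)\ge C\cdot d_{\mathrm{par}}(\mu,\nu)$, where: (1) for two hardcore models both satisfying the uniqueness condition, $C=\frac1{5000}$; (2) for two hardcore models both $b$-marginally bounded ($0<b<1$), $C=b^3$; (3) for two soft-Ising models both $b$-marginally bounded ($0<b<1$), $C=\frac{b^2}{2}$.
   Context: Hardcore model $(G,\lambda)$, $\lambda\in\mathbb{R}_{\ge0}^V$: weight on $\sigma\in\{-1,+1\}^V$ is $\prod_{v:\sigma_v=+1}\lambda_v$ if $\{v:\sigma_v=+1\}$ is independent, else $0$. Soft-Ising model $(G,J,h)$: $J\in\mathbb{R}^{V\times V}$ symmetric, $J_{uv}\ne0$ only for edges, $h\in\mathbb{R}^V$ (finite), weight $\exp(\sum_{\{u,v\}\in E}J_{uv}\sigma_u\sigma_v+\sum_vh_v\sigma_v)$. Gibbs distribution = normalized weight. Uniqueness condition: $\lambda_v\le(1-\eta)\lambda_c(\Delta)$ for all $v$ for some constant $\eta\in(0,1)$, where $\Delta\ge3$ is the maximum degree and $\lambda_c(\Delta)=\frac{(\Delta-1)^{\Delta-1}}{(\Delta-2)^\Delta}$. Parameter distance: for hardcore models, $d_{\mathrm{par}}(\mu,\nu)=\max_v|\lambda^\mu_v-\lambda^\nu_v|$; for soft-Ising models, $d_{\mathrm{par}}(\mu,\nu)=\max\{\max_{u,v}|J^\mu_{uv}-J^\nu_{uv}|,\ \max_v\frac{|h^\mu_v-h^\nu_v|}{\deg_v+1}\}$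 with $\deg_v$ the degree of $v$ in $G$. $b$-marginally bounded: for every $\Lambda\subseteq V$, feasible $\sigma\in\{\pm1\}^\Lambda$, $v\in V$, $c\in\{\pm1\}$, if $\mu^\sigma_v(c)>0$ then $\mu^\sigma_v(c)\ge b$ ($\mu^\sigma_v$ = marginal at $v$ of $\mu$ conditioned on $\sigma$). *)

(* Defs.v *)
From HB Require Import structures.
From mathcomp Require Import all_boot all_order all_algebra.
From mathcomp Require Import reals sequences exp.
Set Implicit Arguments. Unset Strict Implicit. Unset Printing Implicit Defensive.
Import Order.TTheory GRing.Theory Num.Theory.
Local Open Scope ring_scope.

Section Defs.
Variable R : realType.
Variable V : finType.

(* Spin configurations sigma in {-1,+1}^V; [true] encodes +1, [false] encodes -1. *)
Definition config := {ffun V -> bool}.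
Definition spin (b : bool) : R := if b then 1 else -1.

Definition simple_graph (e : rel V) : Prop := symmetric e /\ irreflexive e.

Definition deg (e : rel V) (v : V) : nat := #|[set u | e v u]|.
Definition maxdeg (e : rel V) : nat := (\max_(v : V) deg e v)%N.

Definition partition (w : config -> R) : R := \sum_(s : config) w s.
Definition gibbs (w : config -> R) (s : config) : R := w s / partition w.
Definition prob (w : config -> R) (P : pred config) : R :=
  \sum_(s : config | P s) gibbs w s.

Definition dTV (w1 w2 : config -> R) : R :=
  2^-1 * \sum_(s : config) `|gibbs w1 s - gibbs w2 s|.

Definition independent (e : rel V) (s : config) : bool :=
  [forall u, forall v, (s u && s v) ==> ~~ e u v].
Definition hc_weight (e : rel V) (lam : V -> R) (s : config) : R :=
  if independent e s then \prod_(v : V | s v) lam v else 0.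
Definition hc_params (lam : V -> R) : Prop := forall v, 0 <= lam v.

Definition lambda_c (D : nat) : R :=
  ((D.-1)%:R) ^+ (D.-1) / ((D.-2)%:R) ^+ D.

Definition uniqueness (e : rel V) (lam : V -> R) : Prop :=
  (3 <= maxdeg e)%N /\
  exists eta : R, 0 < eta < 1 /\ forall v, lam v <= (1 - eta) * lambda_c (maxdeg e).

Definition dpar_hc (lam1 lam2 : V -> R) : R :=
  \big[Num.max/0]_(v : V) `|lam1 v - lam2 v|.

Definition ising_params (e : rel V) (J : V -> V -> R) : Prop :=
  (forall u v, J u v = J v u) /\ (forall u v, ~~ e u v -> J u v = 0).
(* sum over (unordered) edges {u,v} of J_uv s_u s_v, written as half of the
   sum over ordered adjacent pairs (J is symmetric). *)
Definition ising_weight (e : rel V) (J : V -> V -> R) (h : V -> R) (s : config) : R :=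
  expR (2^-1 * (\sum_(u : V) \sum_(v : V | e u v) J u v * spin (s u) * spin (s v))
        + \sum_(v : V) h v * spin (s v)).

Definition dpar_ising (e : rel V) (J1 J2 : V -> V -> R) (h1 h2 : V -> R) : R :=
  Num.max (\big[Num.max/0]_(u : V) \big[Num.max/0]_(v : V) `|J1 u v - J2 u v|)
          (\big[Num.max/0]_(v : V) (`|h1 v - h2 v| / (deg e v).+1%:R)).

(* configurations agreeing with the partial configuration tau on Lam *)
Definition agrees (Lam : {set V}) (tau : config) : pred config :=
  fun s => [forall v in Lam, s v == tau v].
Definition feasible (w : config -> R) (Lam : {set V}) (tau : config) : Prop :=
  0 < prob w (agrees Lam tau).
Definition cond_marginal (w : config -> R) (Lam : {set V}) (tau : config)
    (v : V) (c : bool) : R :=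
  prob w (fun s => agrees Lam tau s && (s v == c)) / prob w (agrees Lam tau).

Definition marginally_bounded (b : R) (w : config -> R) : Prop :=
  forall (Lam : {set V}) (tau : config) (v : V) (c : bool),
    feasible w Lam tau ->
    0 < cond_marginal w Lam tau v c -> b <= cond_marginal w Lam tau v c.

End Defs.

(* Main.v *)
Require Import Defs.
From HB Require Import structures.
From mathcomp Require Import all_boot all_order all_algebra.
From mathcomp Require Import reals sequences exp.
From mathcomp Require Import ring lra.
Import Order.TTheory GRing.Theory Num.Theory.
Local Open Scope ring_scope.

Set Implicit Arguments. Unset Strict Implicit. Unset Printing Implicit Defensive.

Section Gen.
Variable R : realType.

Lemma ln_lip (y z b : R) : 0 < b -> b <= y -> b <= z -> `|ln y - ln z| <= `|y - z| / b.
Proof.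
move=> b0 hy bz.
have y0 : 0 < y by apply: lt_le_trans hy.
have z0 : 0 < z by apply: lt_le_trans bz.
wlog yz : y z y0 z0 hy bz / z <= y.
  move=> H; case: (leP z y) => [/H|/ltW/H]; first by apply.
  by move=> /(_ z0 y0 bz hy); rewrite distrC [`|y - z|]distrC.
rewrite -ln_div ?posrE //.
have h1 : 0 <= ln (y / z) by apply: ln_ge0; rewrite ler_pdivlMr // mul1r.
rewrite ger0_norm // ger0_norm ?subr_ge0 //.
have h2 : ln (y / z) <= y / z - 1.
  have := @le_ln1Dx R (y / z - 1).
  rewrite (addrC 1 (y / z - 1)) subrK; apply.
  by rewrite ltrBrDl subrr divr_gt0.
apply: (le_trans h2).
apply: (@le_trans _ _ ((y - z) / z)).
  by rewrite mulrBl divff ?gt_eqF.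
by apply: ler_wpM2l; [rewrite subr_ge0|rewrite lef_pV2 ?posrE].
Qed.
End Gen.


Section Prob.
Variable R : realType.
Variable V : finType.
Implicit Types (w : config V -> R) (s t : config V).

Definition upd (s : config V) (v : V) (c : bool) : config V :=
  [ffun x => if x == v then c else s x].

Definition flip (s : config V) (v : V) : config V :=
  [ffun x => if x == v then ~~ s x else s x].

Lemma flipK v : involutive (flip ^~ v).
Proof. by move=> s; apply/ffunP => x; rewrite !ffunE; case: eqP => // _; rewrite negbK. Qed.

Lemma upd_same s v c : upd s v c v = c.
Proof. by rewrite ffunE eqxx. Qed.

Lemma upd_other s v c x : x != v -> upd s v c x = s x.
Proof. by rewrite ffunE => /negbTE ->. Qed.

Lemma sum_reindex (F : config V -> R) (G : pred (config V)) v :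
  \sum_(s : config V | s v && G s) F s = \sum_(s : config V | ~~ s v && G (upd s v true)) F (upd s v true).
Proof.
rewrite (reindex_inj (can_inj (flipK v))).
have E s : ~~ s v -> flip s v = upd s v true.
  move=> Hs; apply/ffunP => x; rewrite !ffunE; case: eqP => // ->; exact: Hs.
apply: eq_big => s.
  rewrite ffunE eqxx; case Hs: (s v) => //=; rewrite E //; exact/negbT.
rewrite ffunE eqxx => /andP [Hs _]; rewrite E //.
Qed.

Lemma agrees_pair s t v c :
  (agrees [set~ v] t s && (s v == c)) = (s == upd t v c).
Proof.
apply/andP/eqP.
  move=> [/forall_inP H /eqP svc]; apply/ffunP => x; rewrite ffunE.
  case: eqP => [->|/eqP xv] //; apply/eqP; apply: H; by rewrite !inE.
move=> ->; split; last by rewrite ffunE eqxx.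
by apply/forall_inP => x; rewrite !inE ffunE => /negbTE ->.
Qed.

Lemma pair_sum (F : config V -> R) t v c :
  \sum_(s : config V | agrees [set~ v] t s && (s v == c)) F s = F (upd t v c).
Proof. by apply: big_pred1 => s; rewrite agrees_pair. Qed.

Lemma pair_sum2 (F : config V -> R) t v :
  \sum_(s : config V | agrees [set~ v] t s) F s = F (upd t v false) + F (upd t v true).
Proof.
rewrite (bigID (fun s => s v)) /= addrC -(pair_sum F t v false) -(pair_sum F t v true).
by congr (_ + _); apply: eq_bigl => s; case: (s v); rewrite ?andbT ?andbF.
Qed.

Section W.
Variable w : config V -> R.
Hypothesis w_ge0 : forall s, 0 <= w s.
Hypothesis Z_gt0 : 0 < Defs.partition w.

Lemma gibbs_ge0 s : 0 <= gibbs w s.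
Proof. by rewrite /gibbs divr_ge0 // ltW. Qed.

Lemma gibbs_sum : \sum_s gibbs w s = 1.
Proof. by rewrite /gibbs -mulr_suml divff // gt_eqF. Qed.

Lemma prob_all : prob w predT = 1.
Proof. exact: gibbs_sum. Qed.

Lemma mb_pair b t v c : marginally_bounded b w -> 0 < gibbs w (upd t v c) ->
  b * (gibbs w (upd t v false) + gibbs w (upd t v true)) <= gibbs w (upd t v c).
Proof.
move=> H gpos.
have den : prob w (agrees [set~ v] t) = gibbs w (upd t v false) + gibbs w (upd t v true).
  by rewrite /prob pair_sum2.
have dpos : 0 < gibbs w (upd t v false) + gibbs w (upd t v true).
  by case: c gpos => gpos; [rewrite ltr_wpDl // gibbs_ge0|rewrite ltr_wpDr // gibbs_ge0].
have cm : cond_marginal w [set~ v] t v c = gibbs w (upd t v c) /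
     (gibbs w (upd t v false) + gibbs w (upd t v true)).
  by rewrite /cond_marginal den /prob pair_sum.
have := H [set~ v] t v c; rewrite /feasible den cm => /(_ dpos).
move=> h; rewrite -ler_pdivlMr //; apply: h; exact: divr_gt0.
Qed.

Lemma mb_single b v : marginally_bounded b w -> 0 < prob w (fun s => s v) ->
  b <= prob w (fun s => s v).
Proof.
move=> H p0.
have all1 : prob w (agrees set0 [ffun=> false]) = 1.
  rewrite -prob_all; apply: eq_bigl => s; apply/forall_inP => x; by rewrite inE.
have cm : cond_marginal w set0 [ffun=> false] v true = prob w (fun s => s v).
  rewrite /cond_marginal all1 divr1; apply: eq_bigl => s.
  have -> : agrees set0 [ffun=> false] s by apply/forall_inP => x; rewrite inE.
  by rewrite eqb_id.
rewrite -cm; apply: H; first by rewrite /feasible all1 ltr01.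
by rewrite cm.
Qed.
End W.

Section Two.
Variables w1 w2 : config V -> R.
Hypothesis w1_ge0 : forall s, 0 <= w1 s.
Hypothesis Z1_gt0 : 0 < Defs.partition w1.
Hypothesis w2_ge0 : forall s, 0 <= w2 s.
Hypothesis Z2_gt0 : 0 < Defs.partition w2.

Let d s := gibbs w1 s - gibbs w2 s.

Lemma dTV_ge0 : 0 <= dTV w1 w2.
Proof. by rewrite /dTV mulr_ge0 // ?invr_ge0 ?ler0n // sumr_ge0. Qed.

Lemma prob_dTV (E : pred (config V)) : `|prob w1 E - prob w2 E| <= dTV w1 w2.
Proof.
have e1 : prob w1 E - prob w2 E = \sum_(s : config V | E s) d s by rewrite /prob -sumrB.
have s0 : \sum_s d s = 0 by rewrite sumrB !gibbs_sum // subrr.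
have e2 : \sum_(s : config V | E s) d s = - \sum_(s : config V | ~~ E s) d s.
  have : \sum_s d s = \sum_(s | E s) d s + \sum_(s | ~~ E s) d s by rewrite (bigID E).
  rewrite s0 => /eqP; rewrite eq_sym addr_eq0 => /eqP //.
have h1 : `|\sum_(s : config V | E s) d s| <= \sum_(s : config V | E s) `|d s| by apply: ler_norm_sum.
have h2 : `|\sum_(s : config V | E s) d s| <= \sum_(s : config V | ~~ E s) `|d s|.
  by rewrite e2 normrN; apply: ler_norm_sum.
have h3 : \sum_s `|d s| = \sum_(s : config V | E s) `|d s| + \sum_(s : config V | ~~ E s) `|d s|.
  by rewrite (bigID E).
rewrite e1 /dTV -/d; rewrite -[X in _ <= _ * X]/(\sum_s `|d s|) h3. lra.
Qed.

Lemma dTV_pairs v :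
  \sum_(s : config V | ~~ s v) (`|d (upd s v true)| + `|d s|) = 2 * dTV w1 w2.
Proof.
rewrite /dTV mulrA divff ?pnatr_eq0 // mul1r big_split /= addrC.
rewrite [RHS](bigID (fun s => ~~ s v)) /=; congr (_ + _).
have := sum_reindex (fun s => `|d s|) predT v.
rewrite (eq_bigl (fun s : config V => ~~ s v) (fun s => `|d (upd s v true)|)); last by move=> s; rewrite andbT.
move=> <-; by apply: eq_bigl => s; rewrite negbK andbT.
Qed.
End Two.
End Prob.


Lemma sum_le_sub (R : realType) (T : finType) (P1 P2 : pred T) (F G : T -> R) :
  (forall s, P1 s -> P2 s) -> (forall s, P2 s -> 0 <= G s) ->
  (forall s, P1 s -> F s <= G s) -> \sum_(s | P1 s) F s <= \sum_(s | P2 s) G s.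
Proof.
move=> H12 HG HF; rewrite big_mkcond [X in _ <= X]big_mkcond /=.
apply: ler_sum => s _; case: (boolP (P1 s)) => h1; first by rewrite H12 // HF.
by case: (P2 s) (HG s) => // ->.
Qed.

Section HC.
Variable R : realType.
Variable V : finType.
Variable e : rel V.
Hypothesis esym : symmetric e.
Hypothesis eirr : irreflexive e.
Variable lam : V -> R.
Hypothesis lam_ge0 : forall v, 0 <= lam v.
Implicit Types (s : config V).

Local Notation w := (hc_weight e lam).

Lemma hc_ge0 s : 0 <= w s.
Proof. by rewrite /hc_weight; case: ifP => // _; apply: prodr_ge0. Qed.

Definition empty : config V := [ffun=> false].

Lemma hc_empty : w empty = 1.
Proof.
rewrite /hc_weight.
have -> : independent e empty by apply/forallP => u; apply/forallP => x; rewrite !ffunE.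
by rewrite big_pred0 // => x; rewrite ffunE.
Qed.

Lemma hc_Z_gt0 : 0 < Defs.partition w.
Proof.
rewrite /Defs.partition (bigD1 empty) //= hc_empty.
by rewrite ltr_wpDr // sumr_ge0 // => s _; apply: hc_ge0.
Qed.

Definition nbr_out s v := [forall u, e v u ==> ~~ s u].

Lemma upd_true_ge s v x : s x -> upd s v true x.
Proof. by rewrite ffunE; case: eqP. Qed.

Lemma indep_upd s v : ~~ s v ->
  independent e (upd s v true) = independent e s && nbr_out s v.
Proof.
move=> sv; apply/idP/andP.
  move/forallP => H; split.
    apply/forallP => u; apply/forallP => x; apply/implyP => /andP [su sx].
    have := forallP (H u) x; rewrite !upd_true_ge //=.
  apply/forallP => u; apply/implyP => evu; apply/negP => su.
  have := forallP (H v) u; rewrite upd_same upd_true_ge //= evu //.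
move=> [/forallP Hi /forallP Hn]; apply/forallP => u; apply/forallP => x.
rewrite !ffunE; case: (u =P v) => [->|/eqP uv]; case: (x =P v) => [->|/eqP xv] /=.
- by rewrite eirr.
- by apply/implyP => sx; apply/negP => evx; have := implyP (Hn x) evx; rewrite sx.
- by rewrite andbT; apply/implyP => su; apply/negP => euv; rewrite esym in euv; have := implyP (Hn u) euv; rewrite su.
- exact: (forallP (Hi u) x).
Qed.

Lemma hc_upd s v : ~~ s v ->
  w (upd s v true) = if nbr_out s v then lam v * w s else 0.
Proof.
move=> sv; rewrite /hc_weight indep_upd //.
case: (independent e s); case: (nbr_out s v) => //=; rewrite ?mulr0 //.
rewrite (bigD1 v) ?upd_same //=; congr (_ * _); apply: eq_bigl => x.
rewrite ffunE; case: (x =P v) => [->|/eqP xv] /=; first by rewrite (negbTE sv).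
by rewrite andbT.
Qed.

Lemma hc_upd_le s v : ~~ s v -> w (upd s v true) <= lam v * w s.
Proof. by move=> sv; rewrite hc_upd //; case: ifP => // _; rewrite mulr_ge0 // hc_ge0. Qed.

Definition Qv v s := ~~ s v && nbr_out s v.

Lemma prob_sum (P : pred (config V)) :
  prob w P = (\sum_(s | P s) w s) / Defs.partition w.
Proof. by rewrite /prob /gibbs -mulr_suml. Qed.

Lemma hc_PQ v : prob w (fun s => s v) = lam v * prob w (Qv v).
Proof.
rewrite !prob_sum mulrA; congr (_ / _).
have := sum_reindex w predT v.
rewrite (eq_bigl (fun s : config V => s v) w); last by move=> s; rewrite andbT.
move=> ->; rewrite mulr_sumr (eq_bigl (fun s : config V => ~~ s v)); last by move=> s; rewrite andbT.
rewrite [RHS]big_mkcondr /=; apply: eq_bigr => s sv; rewrite hc_upd //.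
Qed.

Definition Qr (r : seq V) s := all (fun u => ~~ s u) r.

Lemma Qr_step r u :
  \sum_(s | Qr r s) w s <= (1 + lam u) * \sum_(s | Qr (u :: r) s) w s.
Proof.
rewrite (bigID (fun s : config V => s u)) /= mulrDl mul1r addrC; apply: lerD.
  by rewrite (eq_bigl (fun s => Qr (u :: r) s)) // => s; rewrite /Qr /= andbC.
rewrite (eq_bigl (fun s : config V => s u && Qr r s)); last by move=> s; rewrite andbC.
rewrite sum_reindex mulr_sumr.
apply: sum_le_sub.
- move=> s /andP [su Hr]; rewrite /Qr /= su /=.
  apply: sub_all Hr => x /=; apply: contra; exact: upd_true_ge.
- by move=> s _; rewrite mulr_ge0 // hc_ge0.
- by move=> s /andP [su _]; apply: hc_upd_le.
Qed.

Lemma Qr_ind r :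
  Defs.partition w <= (\prod_(x <- r) (1 + lam x)) * \sum_(s | Qr r s) w s.
Proof.
elim: r => [|u r IH].
  by rewrite big_nil mul1r.
apply: (le_trans IH); rewrite big_cons -mulrA [X in _ <= X]mulrC -mulrA.
apply: ler_wpM2l.
  by apply: prodr_ge0 => x _; rewrite addr_ge0.
rewrite mulrC; exact: Qr_step.
Qed.

Lemma Qv_Qr v s : Qv v s = Qr (v :: enum [set u | e v u]) s.
Proof.
rewrite /Qv /Qr /=; congr (_ && _); apply/forallP/allP.
  by move=> H x; rewrite mem_enum inE => evx; exact: (implyP (H x) evx).
by move=> H x; apply/implyP => evx; apply: H; rewrite mem_enum inE.
Qed.

Lemma prod_le_pow (r : seq V) (L : R) : (forall x, lam x <= L) ->
  \prod_(x <- r) (1 + lam x) <= (1 + L) ^+ size r.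
Proof.
move=> HL; elim: r => [|u r IH]; first by rewrite big_nil expr0.
rewrite big_cons /= exprS; apply: ler_pM => //.
- by rewrite addr_ge0.
- by apply: prodr_ge0 => x _; rewrite addr_ge0.
- by rewrite lerD2l.
Qed.

Lemma Qv_lower v (L : R) : (forall x, lam x <= L) ->
  ((1 + L) ^+ (deg e v).+1)^-1 <= prob w (Qv v).
Proof.
move=> HL; rewrite prob_sum.
have Z0 := hc_Z_gt0.
have L0 : 0 <= L by apply: le_trans (HL v).
have P0 : 0 < (1 + L) ^+ (deg e v).+1 by rewrite exprn_gt0 // ltr_wpDr.
rewrite ler_pdivlMr // mulrC ler_pdivrMr //.
have := Qr_ind (v :: enum [set u | e v u]).
rewrite -(eq_bigl _ _ (Qv_Qr v)) => H; apply: (le_trans H).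
rewrite mulrC; apply: ler_wpM2l; first by apply: sumr_ge0 => s _; apply: hc_ge0.
have := prod_le_pow (v :: enum [set u | e v u]) HL.
by rewrite /= -cardE.
Qed.

Lemma prob_ge_term (P : pred (config V)) s0 : P s0 -> gibbs w s0 <= prob w P.
Proof.
move=> Ps0; rewrite /prob (bigD1 s0) //= ler_wpDr // sumr_ge0 // => s _.
by apply: gibbs_ge0; [apply: hc_ge0|apply: hc_Z_gt0].
Qed.

Lemma gibbs_empty_gt0 : 0 < gibbs w empty.
Proof. by rewrite /gibbs hc_empty div1r invr_gt0 hc_Z_gt0. Qed.

Lemma Qv_gt0 v : 0 < prob w (Qv v).
Proof.
apply: lt_le_trans gibbs_empty_gt0 _; apply: prob_ge_term.
rewrite /Qv /nbr_out /empty ffunE /=.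
by apply/forallP => u; rewrite ffunE implybT.
Qed.

Lemma upd_empty_false v : upd empty v false = empty.
Proof. by apply/ffunP => x; rewrite !ffunE; case: eqP. Qed.

Lemma gibbs_upd_empty v : gibbs w (upd empty v true) = lam v * gibbs w empty.
Proof.
rewrite /gibbs hc_upd ?ffunE //.
have -> : nbr_out empty v by apply/forallP => u; rewrite ffunE implybT.
by rewrite mulrA.
Qed.

Lemma mb_lam b v : marginally_bounded b w -> b * (1 + lam v) <= 1.
Proof.
move=> H; have := mb_pair hc_ge0 hc_Z_gt0 (t:=empty) (v:=v) (c:=false) H.
rewrite upd_empty_false gibbs_upd_empty => /(_ gibbs_empty_gt0).
have g0 := gibbs_empty_gt0.
have L0 := lam_ge0 v.
move=> h; rewrite -(@ler_pM2r _ (gibbs w empty)) // mul1r; nra.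
Qed.
End HC.

Section HC2.
Variable R : realType.
Variable V : finType.
Variable e : rel V.
Hypothesis esym : symmetric e.
Hypothesis eirr : irreflexive e.
Variables lam1 lam2 : V -> R.
Hypothesis lam1_ge0 : forall v, 0 <= lam1 v.
Hypothesis lam2_ge0 : forall v, 0 <= lam2 v.
Local Notation w1 := (hc_weight e lam1).
Local Notation w2 := (hc_weight e lam2).

Lemma hc_key v :
  `|lam1 v - lam2 v| * prob w1 (Qv e v) <= (1 + lam2 v) * dTV w1 w2.
Proof.
have P1 := hc_PQ esym eirr lam1 v.
have P2 := hc_PQ esym eirr lam2 v.
have Q0 := Qv_gt0 e lam1_ge0 v.
have dP := prob_dTV (hc_Z_gt0 e lam1_ge0) (hc_Z_gt0 e lam2_ge0).
have E : (lam1 v - lam2 v) * prob w1 (Qv e v) =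
  (prob w1 (fun s => s v) - prob w2 (fun s => s v)) +
  lam2 v * (prob w2 (Qv e v) - prob w1 (Qv e v)).
  by rewrite P1 P2; ring.
rewrite -(ger0_norm (ltW Q0)) -normrM E mulrDl mul1r.
apply: (le_trans (ler_normD _ _)); apply: lerD; first exact: dP.
rewrite normrM ger0_norm //; apply: ler_wpM2l => //.
by rewrite distrC; apply: dP.
Qed.

Lemma hc_part2 b v : 0 < b -> marginally_bounded b w1 -> marginally_bounded b w2 ->
  0 < lam1 v -> b ^+ 3 * `|lam1 v - lam2 v| <= dTV w1 w2.
Proof.
move=> b0 H1 H2 l1.
have K := hc_key v.
have B1 := mb_lam esym eirr lam1_ge0 v H1.
have B2 := mb_lam esym eirr lam2_ge0 v H2.
have P1 := hc_PQ esym eirr lam1 v.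
have Q0 := Qv_gt0 e lam1_ge0 v.
have Pb : b <= prob w1 (fun s => s v).
  apply: (mb_single (hc_Z_gt0 e lam1_ge0)) => //.
  by rewrite P1 mulr_gt0.
have D0 := dTV_ge0 w1 w2.
have Qb : b ^+ 2 <= prob w1 (Qv e v).
  rewrite P1 in Pb; nra.
have l2 := lam2_ge0 v.
have n0 := normr_ge0 (lam1 v - lam2 v).
have h1 : b ^+ 3 * `|lam1 v - lam2 v| <= b * (`|lam1 v - lam2 v| * prob w1 (Qv e v)).
  rewrite exprS -mulrA; apply: ler_wpM2l; first exact: ltW.
  by rewrite mulrC; apply: ler_wpM2l.
apply: (le_trans h1); apply: (le_trans (ler_wpM2l (ltW b0) K)).
rewrite mulrA; rewrite -[X in _ <= X]mul1r; exact: ler_wpM2r.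
Qed.
End HC2.

Section HC3.
Variable R : realType.
Variable V : finType.
Variable e : rel V.
Hypothesis esym : symmetric e.
Hypothesis eirr : irreflexive e.
Variables lam1 lam2 : V -> R.
Hypothesis lam1_ge0 : forall v, 0 <= lam1 v.
Hypothesis lam2_ge0 : forall v, 0 <= lam2 v.
Local Notation w1 := (hc_weight e lam1).
Local Notation w2 := (hc_weight e lam2).

Lemma hc_part1 v (L : R) (D : nat) : (forall x, lam1 x <= L) -> (forall x, lam2 x <= L) ->
  (deg e v <= D)%N -> (1 + L) ^+ D.+2 <= 5000 ->
  `|lam1 v - lam2 v| <= 5000 * dTV w1 w2.
Proof.
move=> H1 H2 dv H5.
have K := hc_key esym eirr lam1_ge0 lam2_ge0 v.
have Q := Qv_lower esym eirr lam1_ge0 v H1.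
have L0 : 0 <= L by apply: le_trans (H1 v).
have L1 : 1 <= 1 + L by rewrite lerDl.
have P1 : (1 + L) ^+ (deg e v).+1 <= (1 + L) ^+ D.+1 by apply: ler_weXn2l.
have Pp : 0 < (1 + L) ^+ (deg e v).+1 by rewrite exprn_gt0 // (lt_le_trans ltr01).
have D0 := dTV_ge0 w1 w2.
have n0 := normr_ge0 (lam1 v - lam2 v).
have Q0 := Qv_gt0 e lam1_ge0 v.
have A : `|lam1 v - lam2 v| <= (1 + L) ^+ (deg e v).+1 * ((1 + lam2 v) * dTV w1 w2).
  apply: (le_trans _ (ler_wpM2l (ltW Pp) K)).
  rewrite mulrCA -[X in X <= _]mulr1; apply: ler_wpM2l => //.
  by rewrite -ler_pdivrMl // mulr1.
apply: (le_trans A); apply: (le_trans _ (ler_wpM2r D0 H5)).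
rewrite mulrA; apply: ler_wpM2r => //; rewrite [X in _ <= X]exprSr.
apply: ler_pM => //.
- by apply: exprn_ge0; rewrite addr_ge0.
- by rewrite addr_ge0.
- by rewrite lerD2l.
Qed.
End HC3.


Section NumB.
Variable R : realType.

Lemma expR_small (n : nat) : expR ((n.+2)%:R^-1 : R) <= (n.+2)%:R / (n.+1)%:R.
Proof.
have h := expR_ge1Dx (- (n.+2)%:R^-1 : R).
rewrite expRN in h.
have p : (0 : R) < expR (n.+2)%:R^-1 := expR_gt0 _.
have q : (0:R) < 1 - (n.+2)%:R^-1.
  by rewrite subr_gt0 invf_lt1 // ltr1n.
have E : 1 - (n.+2)%:R^-1 = (n.+1)%:R / (n.+2)%:R :> R.
  rewrite -natr1; have y0 : (n.+1)%:R + 1 != 0 :> R by rewrite natr1 pnatr_eq0.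
  field.
  by apply: lt0r_neq0; have := ler0n R n; lra.
rewrite E in h q.
rewrite -[X in _ <= X]invf_div -(invrK (expR _)) lef_pV2 ?posrE ?invr_gt0 //.
Qed.

Lemma e_le3 : expR (1 : R) <= 3.
Proof.
have E1 : (1 : R) = 6%:R * 6%:R^-1 by rewrite divff // pnatr_eq0.
rewrite {1}E1 expRM_natl.
apply: (le_trans (lerXn2r _ _ _ (expR_small 4))); rewrite ?nnegrE ?expR_ge0 //.
  by rewrite divr_ge0.
rewrite !exprS expr0 mulr1; lra.
Qed.
End NumB.

Section Num2.
Variable R : realType.

Lemma lc_gen (m : nat) : (5 <= m)%N ->
  (1 + ((m.+1)%:R ^+ m.+1 / (m%:R) ^+ m.+2 : R)) ^+ m.+4 <= 5000.
Proof.
move=> m5.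
set x : R := m%:R.
have x5 : 5 <= x by rewrite /x ler_nat.
have x0 : 0 < x by lra.
have E : (m.+1)%:R ^+ m.+1 / x ^+ m.+2 = (1 + x^-1) ^+ m * ((x + 1) / x ^+ 2).
  have -> : (1 + x^-1) = (x + 1) / x by field; lra.
  rewrite expr_div_n -natr1 -/x.
  rewrite !exprS expr0; field; rewrite ?expf_neq0 // ?gt_eqF //.
have H1 : (1 + x^-1) ^+ m <= expR 1.
  have ex : expR 1 = expR (x^-1) ^+ m by rewrite -expRM_natl divff // gt_eqF.
  rewrite ex; apply: lerXn2r; rewrite ?nnegrE ?expR_ge0 ?expR_ge1Dx //.
  by rewrite addr_ge0 // invr_ge0 ltW.
have e3 := e_le3 R.
set L := (m.+1)%:R ^+ m.+1 / x ^+ m.+2.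
have L0 : 0 <= L by rewrite /L divr_ge0 // exprn_ge0 // ltW.
have HL : L <= 3 * ((x + 1) / x ^+ 2).
  rewrite /L E; apply: ler_wpM2r; last exact: le_trans H1 e3.
  by rewrite divr_ge0 // ?exprn_ge0 // ?ltW //; lra.
have H2 : (m.+4)%:R * L <= 7.
  apply: (le_trans (ler_wpM2l (ler0n _ _) HL)).
  have -> : (m.+4)%:R = x + 4 by rewrite /x -[m.+4]addn4 natrD.
  rewrite !mulrA ler_pdivrMr ?exprn_gt0 // expr2; nra.
have H3 : (1 + L) ^+ m.+4 <= expR ((m.+4)%:R * L).
  rewrite expRM_natl; apply: lerXn2r; rewrite ?nnegrE ?expR_ge0 ?expR_ge1Dx //.
  by rewrite addr_ge0.
apply: (le_trans H3); apply: (le_trans (y := expR 7)); first by rewrite ler_expR.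
have -> : (7 : R) = 7%:R * 1 by rewrite mulr1.
rewrite expRM_natl; apply: (le_trans (y := 3 ^+ 7)).
  by apply: lerXn2r; rewrite ?nnegrE ?expR_ge0.
rewrite !exprS expr0; lra.
Qed.

Lemma lc_bound D : (3 <= D)%N -> (1 + lambda_c R D) ^+ D.+2 <= 5000.
Proof.
case: D => [|[|[|[|[|[|[|m]]]]]]] // _; rewrite /lambda_c /=.
- rewrite !exprS !expr0; lra.
- rewrite !exprS !expr0; lra.
- rewrite !exprS !expr0; lra.
- rewrite !exprS !expr0; lra.
- by apply: lc_gen.
Qed.
End Num2.


Section Pure.
Variable R : realType.

Lemma logit_lip (A1 B1 A2 B2 b x1 x2 : R) :
  0 < b -> 0 < A1 -> 0 < B1 -> 0 < A2 -> 0 < B2 ->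
  b * (A1 + B1) <= A1 -> b * (A1 + B1) <= B1 ->
  b * (A2 + B2) <= A2 -> b * (A2 + B2) <= B2 ->
  B1 = expR (2 * x1) * A1 -> B2 = expR (2 * x2) * A2 ->
  b * (A1 + B1) * `|x1 - x2| <= `|B1 - B2| + `|A1 - A2|.
Proof.
move=> b0 a1 b1 a2 b2 ha1 hb1 ha2 hb2 E1 E2.
set S1 := A1 + B1; set S2 := A2 + B2.
have s1 : 0 < S1 by rewrite addr_gt0.
have s2 : 0 < S2 by rewrite addr_gt0.
set p1 := B1 / S1; set p2 := B2 / S2; set q1 := A1 / S1; set q2 := A2 / S2.
have bp1 : b <= p1 by rewrite ler_pdivlMr // mulrC.
have bp2 : b <= p2 by rewrite ler_pdivlMr // mulrC.
have bq1 : b <= q1 by rewrite ler_pdivlMr // mulrC.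
have bq2 : b <= q2 by rewrite ler_pdivlMr // mulrC.
have q1E : q1 = 1 - p1 by rewrite /q1 /p1 /S1; field; rewrite gt_eqF.
have q2E : q2 = 1 - p2 by rewrite /q2 /p2 /S2; field; rewrite gt_eqF.
have L1 : 2 * x1 = ln p1 - ln q1.
  rewrite -ln_div ?posrE ?divr_gt0 //.
  have -> : p1 / q1 = B1 / A1 by rewrite /p1 /q1; field; rewrite !gt_eqF.
  by rewrite E1 mulrK ?unitfE ?gt_eqF // expRK.
have L2 : 2 * x2 = ln p2 - ln q2.
  rewrite -ln_div ?posrE ?divr_gt0 //.
  have -> : p2 / q2 = B2 / A2 by rewrite /p2 /q2; field; rewrite !gt_eqF.
  by rewrite E2 mulrK ?unitfE ?gt_eqF // expRK.
have hp := ln_lip b0 bp1 bp2.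
have hq := ln_lip b0 bq1 bq2.
have hx : b * `|x1 - x2| <= `|p1 - p2|.
  have : 2 * `|x1 - x2| <= `|p1 - p2| / b + `|q1 - q2| / b.
    have -> : 2 * `|x1 - x2| = `|(ln p1 - ln p2) - (ln q1 - ln q2)|.
      by rewrite -(ger0_norm (ler0n R 2)) -normrM mulrBr L1 L2; congr `|_|; ring.
    by apply: (le_trans (ler_normB _ _)); apply: lerD.
  have -> : `|q1 - q2| = `|p1 - p2| by rewrite q1E q2E distrC; congr `|_|; ring.
  move=> h; have h2 : `|x1 - x2| <= `|p1 - p2| / b by lra.
  by rewrite ler_pdivlMr // mulrC in h2.
have hS : S1 * `|p1 - p2| <= `|B1 - B2| + `|A1 - A2|.
  have e : S1 * (p1 - p2) = (1 - p2) * (B1 - B2) - p2 * (A1 - A2).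
    have h1 : S1 * p1 = B1 by rewrite /p1 mulrC divfK ?gt_eqF.
    have h2 : p2 * (A2 + B2) = B2 by rewrite /p2 divfK ?gt_eqF.
    rewrite mulrBr h1 /S1; move: h2; clearbody p2; move=> h2; nra.
  have p20 : 0 <= p2 by rewrite divr_ge0 // ltW.
  have p21 : p2 <= 1 by rewrite ler_pdivrMr // mul1r lerDr ltW.
  rewrite -(ger0_norm (ltW s1)) -normrM e.
  have p3 : 0 <= 1 - p2 by rewrite subr_ge0.
  apply: (le_trans (ler_normB _ _)).
  rewrite (normrM (1 - p2)) (normrM p2) [`|1 - p2|]ger0_norm // [`|p2|]ger0_norm //.
  apply: lerD; rewrite -[X in _ <= X]mul1r ler_wpM2r //; lra.
rewrite mulrAC mulrC; apply: (le_trans _ hS).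
by apply: ler_wpM2l; [exact: ltW|].
Qed.
End Pure.

Lemma sum_split (R : realType) (V : finType) (F : config V -> R) v :
  \sum_s F s = \sum_(s : config V | ~~ s v) (F s + F (upd s v true)).
Proof.
rewrite big_split /= (bigID (fun s : config V => ~~ s v)) /=; congr (_ + _).
have := sum_reindex F predT v.
rewrite (eq_bigl (fun s : config V => ~~ s v) (fun s => F (upd s v true))); last by move=> s; rewrite andbT.
move=> <-; by apply: eq_bigl => s; rewrite negbK andbT.
Qed.

Section Ising.
Variable R : realType.
Variable V : finType.
Variable e : rel V.
Hypothesis esym : symmetric e.
Hypothesis eirr : irreflexive e.
Implicit Types (s : config V) (J : V -> V -> R) (h : V -> R).

Definition Eng J h s : R :=
  2^-1 * (\sum_(u : V) \sum_(v : V | e u v) J u v * spin R (s u) * spin R (s v))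
        + \sum_(v : V) h v * spin R (s v).

Definition Hf J h v s : R := h v + \sum_(w : V | e v w) J v w * spin R (s w).

Lemma eng_diff J h s v : (forall x y, J x y = J y x) ->
  Eng J h (upd s v true) = 2 * Hf J h v s + Eng J h (upd s v false).
Proof.
move=> Jsym.
set s1 := upd s v true; set s0 := upd s v false.
have sp : forall u w, u != w ->
  spin R (s1 u) * spin R (s1 w) - spin R (s0 u) * spin R (s0 w) =
  2 * ((u == v)%:R * spin R (s w) + (w == v)%:R * spin R (s u)).
  move=> u w uw; rewrite /s1 /s0 !ffunE.
  case: (u =P v) => [Eu|/eqP uv]; case: (w =P v) => [Ew|/eqP wv] /=.
  - by move: uw; rewrite Eu Ew eqxx.
  - rewrite /spin; ring.
  - rewrite /spin; ring.
  - by rewrite !mul0r addr0 mulr0 subrr.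
have hd : \sum_x h x * spin R (s1 x) - \sum_x h x * spin R (s0 x) = 2 * h v.
  rewrite -sumrB (bigD1 v) //= big1 => [|x xv].
    by rewrite /s1 /s0 !upd_same /spin addr0; ring.
  by rewrite /s1 /s0 !upd_other // subrr.
have A : \sum_u \sum_(w | e u w) J u w * ((u == v)%:R * spin R (s w)) =
         \sum_(w | e v w) J v w * spin R (s w).
  rewrite [LHS](bigD1 v) //= [X in _ + X]big1 => [|u uv]; last first.
    by apply: big1 => w _; rewrite (negbTE uv) mul0r mulr0.
  by rewrite addr0; apply: eq_bigr => w _; rewrite eqxx mul1r.
have B : \sum_u \sum_(w | e u w) J u w * ((w == v)%:R * spin R (s u)) =
         \sum_(w | e v w) J v w * spin R (s w).
  have inner : forall u, \sum_(w | e u w) J u w * ((w == v)%:R * spin R (s u)) =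
      if e v u then J v u * spin R (s u) else 0.
    move=> u; rewrite big_mkcond (bigD1 v) //= big1 => [|w wv]; last first.
      by case: ifP => // _; rewrite (negbTE wv) mul0r mulr0.
    by rewrite addr0 eqxx mul1r esym Jsym.
  by rewrite (eq_bigr _ (fun u _ => inner u)) -big_mkcond.
have D : \sum_u \sum_(w | e u w) J u w * spin R (s1 u) * spin R (s1 w) -
         \sum_u \sum_(w | e u w) J u w * spin R (s0 u) * spin R (s0 w) =
         4 * \sum_(w | e v w) J v w * spin R (s w).
  rewrite -sumrB.
  have -> : \sum_u (\sum_(w | e u w) J u w * spin R (s1 u) * spin R (s1 w) -
                    \sum_(w | e u w) J u w * spin R (s0 u) * spin R (s0 w)) =
            \sum_u \sum_(w | e u w) (2 * (J u w * ((u == v)%:R * spin R (s w))) +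
                                     2 * (J u w * ((w == v)%:R * spin R (s u)))).
    apply: eq_bigr => u _; rewrite -sumrB; apply: eq_bigr => w euw.
    have uw : u != w by apply: contraTneq euw => ->; rewrite eirr.
    by rewrite -!mulrA -mulrBr sp //; ring.
  rewrite (eq_bigr (fun u => 2 * \sum_(w | e u w) J u w * ((u == v)%:R * spin R (s w)) +
                             2 * \sum_(w | e u w) J u w * ((w == v)%:R * spin R (s u)))).
    by rewrite big_split /= -!mulr_sumr A B; ring.
  by move=> u _; rewrite big_split /= -!mulr_sumr.
rewrite /Eng /Hf; lra.
Qed.

Lemma ising_wE J h s : ising_weight e J h s = expR (Eng J h s).
Proof. by []. Qed.

Lemma ising_gt0 J h s : 0 < ising_weight e J h s.
Proof. exact: expR_gt0. Qed.

Lemma ising_Z_gt0 J h : 0 < Defs.partition (ising_weight e J h).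
Proof.
rewrite /Defs.partition (bigD1 [ffun=> false]) //= ltr_pwDl ?ising_gt0 //.
by apply: sumr_ge0 => s _; apply: ltW; apply: ising_gt0.
Qed.

Lemma ising_gibbs_gt0 J h s : 0 < gibbs (ising_weight e J h) s.
Proof. by rewrite /gibbs divr_gt0 ?ising_gt0 ?ising_Z_gt0. Qed.

Lemma upd_false_id s v : ~~ s v -> upd s v false = s.
Proof. by move=> sv; apply/ffunP => x; rewrite ffunE; case: eqP => // ->; rewrite (negbTE sv). Qed.

Lemma gibbs_upd J h s v : (forall x y, J x y = J y x) ->
  gibbs (ising_weight e J h) (upd s v true) =
  expR (2 * Hf J h v s) * gibbs (ising_weight e J h) (upd s v false).
Proof. by move=> Js; rewrite /gibbs !ising_wE eng_diff // expRD mulrA. Qed.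

Lemma Hf_upd J h v s c : Hf J h v (upd s v c) = Hf J h v s.
Proof.
rewrite /Hf; congr (_ + _); apply: eq_bigr => w evw.
have wv : w != v by apply: contraTneq evw => ->; rewrite eirr.
by rewrite upd_other.
Qed.

Lemma Hf_upd_other J h v s u : e v u -> ~~ s u ->
  Hf J h v (upd s u true) = Hf J h v s + 2 * J v u.
Proof.
move=> evu su; rewrite /Hf -addrA; congr (_ + _).
rewrite (bigD1 u) //= [X in _ = X + _](bigD1 u) //= upd_same (negbTE su) /spin.
have -> : \sum_(i | e v i && (i != u)) J v i * spin R (upd s u true i) =
          \sum_(i | e v i && (i != u)) J v i * spin R (s i).
  by apply: eq_bigr => i /andP [_ iu]; rewrite upd_other.
ring.
Qed.
End Ising.

Section Ising2.
Variable R : realType.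
Variable V : finType.
Variable e : rel V.
Hypothesis esym : symmetric e.
Hypothesis eirr : irreflexive e.
Variables (J1 J2 : V -> V -> R) (h1 h2 : V -> R).
Hypothesis J1sym : forall x y, J1 x y = J1 y x.
Hypothesis J2sym : forall x y, J2 x y = J2 y x.
Variable b : R.
Hypothesis b0 : 0 < b.
Local Notation w1 := (ising_weight e J1 h1).
Local Notation w2 := (ising_weight e J2 h2).
Hypothesis mb1 : marginally_bounded b w1.
Hypothesis mb2 : marginally_bounded b w2.

Definition dH v (s : config V) := Hf e J1 h1 v s - Hf e J2 h2 v s.
Definition M v := \sum_s gibbs w1 s * `|dH v s|.

Lemma mbI (J : V -> V -> R) h (s : config V) (v : V) : marginally_bounded b (ising_weight e J h) -> ~~ s v ->
  b * (gibbs (ising_weight e J h) s + gibbs (ising_weight e J h) (upd s v true)) <=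
  gibbs (ising_weight e J h) s /\
  b * (gibbs (ising_weight e J h) s + gibbs (ising_weight e J h) (upd s v true)) <=
  gibbs (ising_weight e J h) (upd s v true).
Proof.
move=> H sv.
have P c := mb_pair (fun s => ltW (ising_gt0 e J h s)) (ising_Z_gt0 e J h) (t := s) (v := v) (c := c) H
   (ising_gibbs_gt0 _ _ _ _).
have := P false; have := P true; rewrite !upd_false_id //.

Qed.

Lemma ising_A v : b * M v <= 2 * dTV w1 w2.
Proof.
rewrite /M (sum_split _ v) mulr_sumr -(dTV_pairs w1 w2 v).
apply: ler_sum => s sv.
have [A1 B1] := mbI mb1 sv.
have [A2 B2] := mbI mb2 sv.
rewrite /dH !(Hf_upd eirr).
rewrite -mulrDl mulrA.
apply: logit_lip => //; try exact: ising_gibbs_gt0.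
- by rewrite gibbs_upd // upd_false_id.
- by rewrite gibbs_upd // upd_false_id.
Qed.

Lemma gibbs1_pairs u :
  \sum_(s : config V | ~~ s u) (gibbs w1 s + gibbs w1 (upd s u true)) = 1.
Proof. by rewrite -sum_split gibbs_sum // ising_Z_gt0. Qed.

Lemma ising_B v u : e v u -> 2 * b * `|J1 v u - J2 v u| <= M v.
Proof.
move=> evu.
have -> : 2 * b * `|J1 v u - J2 v u| = 2 * b * `|J1 v u - J2 v u| *
  \sum_(s : config V | ~~ s u) (gibbs w1 s + gibbs w1 (upd s u true)) by rewrite gibbs1_pairs mulr1.
rewrite mulr_sumr /M (sum_split _ u).
apply: ler_sum => s su.
have [A1 B1] := mbI mb1 su.
have dE : dH v (upd s u true) = dH v s + 2 * (J1 v u - J2 v u).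
  by rewrite /dH !Hf_upd_other //; ring.
rewrite dE.
set a := gibbs w1 s; set c := gibbs w1 (upd s u true).
set x := dH v s; set y := J1 v u - J2 v u.
have k0 : 0 <= b * (a + c) by rewrite mulr_ge0 ?ltW // addr_gt0 // ising_gibbs_gt0.
have t : `|2 * y| <= `|x| + `|x + 2 * y|.
  have e2 : 2 * y = (x + 2 * y) - x by ring.
  by rewrite {1}e2 [X in _ <= X]addrC; apply: ler_normB.
have t1 : b * (a + c) * `|x| <= a * `|x| by apply: ler_wpM2r.
have t2 : b * (a + c) * `|x + 2 * y| <= c * `|x + 2 * y| by apply: ler_wpM2r.
have t3 : b * (a + c) * `|2 * y| <= b * (a + c) * (`|x| + `|x + 2 * y|) by apply: ler_wpM2l.
rewrite normrM (ger0_norm (ler0n R 2)) in t3.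
have -> : 2 * b * `|y| * (a + c) = b * (a + c) * (2 * `|y|) by ring.
apply: (le_trans t3); rewrite mulrDr; exact: lerD.
Qed.


Lemma ising_C v :
  `|h1 v - h2 v| - \sum_(w | e v w) `|J1 v w - J2 v w| <= M v.
Proof.
set S := \sum_(w | e v w) _.
have pt (s : config V) : `|h1 v - h2 v| - S <= `|dH v s|.
  have E : dH v s = (h1 v - h2 v) + \sum_(w | e v w) (J1 v w - J2 v w) * spin R (s w).
    rewrite [X in _ = _ + X](eq_bigr (fun w => J1 v w * spin R (s w) - J2 v w * spin R (s w))); last first.
      by move=> w _; rewrite mulrBl.
    rewrite sumrB /dH /Hf; ring.
  have N : `|\sum_(w | e v w) (J1 v w - J2 v w) * spin R (s w)| <= S.
    apply: (le_trans (ler_norm_sum _ _ _)); apply: ler_sum => w _.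
    by rewrite normrM; case: (s w); rewrite /spin ?normrN normr1 mulr1.
  have : `|h1 v - h2 v| <= `|dH v s| + `|\sum_(w | e v w) (J1 v w - J2 v w) * spin R (s w)|.
    have e2 : h1 v - h2 v = dH v s - \sum_(w | e v w) (J1 v w - J2 v w) * spin R (s w).
      by rewrite E; ring.
    by rewrite {1}e2; apply: ler_normB.
  lra.
rewrite /M; apply: (le_trans _ (ler_sum _ (fun s _ => ler_wpM2l (ltW (ising_gibbs_gt0 e J1 h1 s)) (pt s)))).
by rewrite -mulr_suml gibbs_sum ?mul1r // ising_Z_gt0.
Qed.

Lemma ising_J_edge v u : e v u -> b ^+ 2 * `|J1 v u - J2 v u| <= dTV w1 w2.
Proof.
move=> evu; have A := ising_A v; have B := ising_B evu.
have n0 := normr_ge0 (J1 v u - J2 v u).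
have : b * (2 * b * `|J1 v u - J2 v u|) <= 2 * dTV w1 w2.
  by apply: le_trans A; apply: ler_wpM2l => //; apply: ltW.
rewrite expr2; lra.
Qed.

Lemma ising_h v : b <= 1 ->
  b ^+ 2 / 2 * (`|h1 v - h2 v| / (deg e v).+1%:R) <= dTV w1 w2.
Proof.
move=> b1.
set S := \sum_(w | e v w) `|J1 v w - J2 v w|.
set D := dTV w1 w2.
have D0 : 0 <= D := dTV_ge0 w1 w2.
set d : R := (deg e v)%:R.
have d0 : 0 <= d := ler0n _ _.
have HS : b ^+ 2 * S <= d * D.
  rewrite /S mulr_sumr.
  apply: (le_trans (ler_sum _ (fun w (ew : e v w) => ising_J_edge ew))).
  rewrite (eq_bigl (fun w => w \in [set w | e v w])); last by move=> w; rewrite inE.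
  by rewrite sumr_const /d /deg mulr_natl.
have C := ising_C v; rewrite -/S in C.
have A := ising_A v.
have H1 : b * (`|h1 v - h2 v| - S) <= 2 * D.
  by apply: le_trans A; apply: ler_wpM2l => //; apply: ltW.
have H2 : b ^+ 2 * `|h1 v - h2 v| <= 2 * b * D + d * D.
  have : b * (b * (`|h1 v - h2 v| - S)) <= b * (2 * D) by apply: ler_wpM2l => //; apply: ltW.
  rewrite expr2 in HS *; lra.
have H3 : 2 * b * D <= 2 * D.
  rewrite -mulrA; apply: ler_wpM2l => //; rewrite -[X in _ <= X]mul1r; exact: ler_wpM2r.
have dp : 0 < (deg e v).+1%:R :> R by rewrite ltr0n.
rewrite mulrA ler_pdivrMr // -/d.
have -> : (deg e v).+1%:R = d + 1 :> R by rewrite /d -natr1.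
rewrite mulrAC ler_pdivrMr ?ltr0n //.
have dD : 0 <= d * D by rewrite mulr_ge0.
lra.
Qed.

End Ising2.


Lemma bigmax_bound (R : realType) (I : finType) (F : I -> R) (c D : R) :
  0 <= D -> (forall i, c * F i <= D) -> c * \big[Num.max/0]_i F i <= D.
Proof.
move=> D0 H; elim/big_ind: _ => //; first by rewrite mulr0.
by move=> x y hx hy; rewrite maxEle; case: ifP.
Qed.

Lemma dTV_sym (R : realType) (V : finType) (w1 w2 : config V -> R) : dTV w1 w2 = dTV w2 w1.
Proof. by rewrite /dTV; congr (_ * _); apply: eq_bigr => s _; rewrite distrC. Qed.


Unset Implicit Arguments.
Set Strict Implicit.

Theorem lemma2p2 (R : realType) (V : finType) (e : rel V) :
  simple_graph e ->
  (* (1) hardcore models in the uniqueness regime *)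
  (forall lam1 lam2 : V -> R,
     hc_params lam1 -> hc_params lam2 ->
     uniqueness e lam1 -> uniqueness e lam2 ->
     dTV (hc_weight e lam1) (hc_weight e lam2) >= 5000^-1 * dpar_hc lam1 lam2) /\
  (* (2) b-marginally bounded hardcore models *)
  (forall (b : R) (lam1 lam2 : V -> R),
     0 < b < 1 ->
     hc_params lam1 -> hc_params lam2 ->
     marginally_bounded b (hc_weight e lam1) ->
     marginally_bounded b (hc_weight e lam2) ->
     dTV (hc_weight e lam1) (hc_weight e lam2) >= b ^+ 3 * dpar_hc lam1 lam2) /\
  (* (3) b-marginally bounded soft-Ising models *)
  (forall (b : R) (J1 J2 : V -> V -> R) (h1 h2 : V -> R),
     0 < b < 1 ->
     ising_params e J1 -> ising_params e J2 ->
     marginally_bounded b (ising_weight e J1 h1) ->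
     marginally_bounded b (ising_weight e J2 h2) ->
     dTV (ising_weight e J1 h1) (ising_weight e J2 h2)
       >= b ^+ 2 / 2 * dpar_ising e J1 J2 h1 h2).
Proof.
move=> [esym eirr]; split; [|split].
- move=> lam1 lam2 l1 l2 [D3 [eta1 [/andP [et1 et1'] U1]]] [_ [eta2 [/andP [et2 et2'] U2]]].
  set L := lambda_c R (maxdeg e).
  have L0 : 0 <= L by rewrite /L /lambda_c divr_ge0 // exprn_ge0.
  have B1 x : lam1 x <= L.
    apply: (le_trans (U1 x)); rewrite -[X in _ <= X]mul1r ler_wpM2r //; lra.
  have B2 x : lam2 x <= L.
    apply: (le_trans (U2 x)); rewrite -[X in _ <= X]mul1r ler_wpM2r //; lra.
  apply: bigmax_bound; first exact: dTV_ge0.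
  move=> v; rewrite ler_pdivrMl ?ltr0n //.
  apply: (hc_part1 esym eirr l1 l2 B1 B2); first exact: leq_bigmax.
  exact: lc_bound.
- move=> b lam1 lam2 /andP [b0 b1] l1 l2 m1 m2.
  apply: bigmax_bound; first exact: dTV_ge0.
  move=> v; case: (ltrP 0 (lam1 v)) => p1.
    exact: (hc_part2 esym eirr l1 l2 b0 m1 m2 p1).
  case: (ltrP 0 (lam2 v)) => p2.
    by rewrite distrC dTV_sym; exact: (hc_part2 esym eirr l2 l1 b0 m2 m1 p2).
  have -> : lam1 v = 0 by apply/eqP; rewrite eq_le p1 l1.
  have -> : lam2 v = 0 by apply/eqP; rewrite eq_le p2 l2.
  by rewrite subrr normr0 mulr0 dTV_ge0.
- move=> b J1 J2 h1 h2 /andP [b0 b1] [J1s J1z] [J2s J2z] m1 m2.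
  have D0 := dTV_ge0 (ising_weight e J1 h1) (ising_weight e J2 h2).
  rewrite /dpar_ising maxEle; case: ifP => _.
  + apply: bigmax_bound => // v.
    exact: (ising_h esym eirr J1s J2s b0 m1 m2 v (ltW b1)).
  + apply: bigmax_bound => // u; apply: bigmax_bound => // v.
    case: (boolP (e u v)) => euv.
      have := ising_J_edge esym eirr J1s J2s b0 m1 m2 euv.
      have n0 := normr_ge0 (J1 u v - J2 u v).
      have bb : 0 <= b ^+ 2 by rewrite exprn_ge0 // ltW.
      nra.
    by rewrite J1z // J2z // subrr normr0 mulr0.
Qed.
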